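(* For every integer $n\ge2$ and every integer $k$ with $0\le k\le\lfloor n/2\rfloor$, \[ d^-_{n,k}=Y(n-k,k)=\binom{n-k}{k}+\binom{n-k-1}{k-1}. \]
   Context: For $n\ge1$ let $\Xi_n$ be the poset on $\{x_1,\dots,x_n\}$ whose cover relations are exactly: $x_2\prec x_1$, $x_3\prec x_2$, and for $3\le i\le n-1$, $x_i\prec x_{i+1}$ if $i$ is odd and $x_{i+1}\prec x_i$ if $i$ is even (so $x_1>x_2>x_3<x_4>x_5<\cdots$). A filter of a poset is an up-closed subset. $\Omega_n$ is the lattice of filters of $\Xi_n$ ordered by reverse inclusion. $d^-_{n,k}$ is the number of elements of $\Omega_n$ that are covered by exactly $k$ elements of $\Omega_n$ (the number of vertices of indegree $k$ in the Hasse diagram oriented from larger to smaller elements; equivalently the number of $k$-element antichains of $\Xi_n$). $Y(n,k)=\binom nk+\binom{n-1}{k-1}$ is the Lucas triangle, with binomials of negative lower index equal to $0$ except $\binom{-1}{-1}=1$. *)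

(* Defs.v *)
From mathcomp Require Import all_boot.
Set Implicit Arguments. Unset Strict Implicit. Unset Printing Implicit Defensive.

(* Elements x_1,...,x_n of Xi_n are encoded as i : 'I_n, with x_(i+1) <-> i. *)

(* xi_cov n i j : x_(i+1) is covered by x_(j+1) in Xi_n (x_(i+1) < x_(j+1)). *)
Definition xi_cov (n : nat) : rel 'I_n := fun i j =>
  let a := i.+1 in let b := j.+1 in
  [|| (a == 2) && (b == 1),
      (a == 3) && (b == 2),
      [&& 3 <= a, a <= n - 1, odd a & b == a.+1]
    | [&& 3 <= b, b <= n - 1, ~~ odd b & a == b.+1] ].

Definition xi_le (n : nat) : rel 'I_n := connect (@xi_cov n).

Definition is_filter (n : nat) (F : {set 'I_n}) : bool :=
  [forall x, forall y, (x \in F) && xi_le x y ==> (y \in F)].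

Definition filters (n : nat) : {set {set 'I_n}} := [set F | is_filter F].

(* Omega_n = filters ordered by reverse inclusion: F <= G in Omega_n iff G \subset F.
   omega_covers n F G : G covers F in Omega_n. *)
Definition omega_covers (n : nat) (F G : {set 'I_n}) : bool :=
  (G \proper F) &&
  [forall H in filters n, ~~ ((G \proper H) && (H \proper F))].

Definition dminus (n k : nat) : nat :=
  #|[set F in filters n | #|[set G in filters n | omega_covers F G]| == k]|.

(* Lucas triangle Y(m,k) = C(m,k) + C(m-1,k-1), with binomials of negative lower
   index equal to 0 except C(-1,-1) = 1. *)
Definition lucasY (m k : nat) : nat :=
  'C(m, k) + (match k with
              | 0 => (m == 0 : nat)
              | k'.+1 => 'C(m.-1, k')
              end).

(* Main.v *)
Require Import Defs.
From mathcomp Require Import all_boot zify.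
Set Implicit Arguments. Unset Strict Implicit. Unset Printing Implicit Defensive.

Definition hn (a : nat) := if a == 1 then 2 else if a == 2 then 1 else if odd a then 0 else 1.

Lemma hn_odd a : 3 <= a -> odd a -> hn a = 0.
Proof. by rewrite /hn => H ->; rewrite !ifN_eq //; lia. Qed.
Lemma hn_even a : 3 <= a -> ~~ odd a -> hn a = 1.
Proof. by rewrite /hn => H /negbTE ->; rewrite !ifN_eq //; lia. Qed.

Lemma cov_ht n (i j : 'I_n) : xi_cov i j -> hn i.+1 < hn j.+1.
Proof.
rewrite /xi_cov; case/or4P.
- by case/andP=> /eqP-> /eqP->.
- by case/andP=> /eqP-> /eqP->.
- case/and4P=> H3 _ Ho /eqP->; rewrite hn_odd // hn_even //; first lia. by move: Ho => /=; rewrite !negbK.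
- case/and4P=> H3 _ Ho /eqP[->]; rewrite hn_odd ?hn_even //=; lia.
Qed.

Lemma le_ht n (x y : 'I_n) : xi_le x y -> x = y \/ hn x.+1 < hn y.+1.
Proof.
move/connectP=> [p]; elim: p x => [|z p IH] x /=; first by move=> _ ->; left.
case/andP=> cxz /IH H /H [<-|lt]; right; first exact: cov_ht.
exact: ltn_trans (cov_ht cxz) lt.
Qed.

Lemma le_anti n (x y : 'I_n) : xi_le x y -> xi_le y x -> x = y.
Proof. by move=> /le_ht [//|H1] /le_ht [//|H2]; lia. Qed.

Lemma le_refl n (x : 'I_n) : xi_le x x.
Proof. exact: connect0. Qed.

Lemma le_trans n (x y z : 'I_n) : xi_le x y -> xi_le y z -> xi_le x z.
Proof. exact: connect_trans. Qed.

Lemma filterP n (F : {set 'I_n}) :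
  reflect (forall x y, x \in F -> xi_le x y -> y \in F) (is_filter F).
Proof.
apply: (iffP forallP) => [H x y xF lxy | H x].
  by have /forallP/(_ y) := H x; rewrite xF lxy.
by apply/forallP=> y; apply/implyP=> /andP[]; apply: H.
Qed.

Definition mins n (F : {set 'I_n}) :=
  [set x in F | [forall y in F, xi_le y x ==> (y == x)]].
Definition up n (A : {set 'I_n}) := [set y | [exists x in A, xi_le x y]].
Definition anti n (A : {set 'I_n}) :=
  [forall x in A, forall y in A, xi_le x y ==> (x == y)].

Lemma minsP n (F : {set 'I_n}) x :
  reflect (x \in F /\ forall y, y \in F -> xi_le y x -> y = x) (x \in mins F).
Proof.
rewrite inE; apply: (iffP andP) => [[xF /forall_inP H]|[xF H]]; split => //.
  by move=> y yF lyx; apply/eqP; move: (H y yF) => /implyP; apply.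
by apply/forall_inP => y yF; apply/implyP => /(H y yF) ->.
Qed.

Lemma antiP n (A : {set 'I_n}) :
  reflect (forall x y, x \in A -> y \in A -> xi_le x y -> x = y) (anti A).
Proof.
apply: (iffP forall_inP) => [H x y xA yA lxy|H x xA].
  by have /forall_inP/(_ y yA)/implyP/(_ lxy)/eqP := H x xA.
by apply/forall_inP => y yA; apply/implyP => /(H x y xA yA) ->.
Qed.

Lemma upP n (A : {set 'I_n}) y :
  reflect (exists2 x, x \in A & xi_le x y) (y \in up A).
Proof. by rewrite inE; apply: (iffP exists_inP). Qed.

Lemma up_filter n (A : {set 'I_n}) : is_filter (up A).
Proof.
apply/filterP => x y /upP[z zA lzx] lxy; apply/upP; exists z => //.
exact: le_trans lxy.
Qed.

Lemma mins_anti n (F : {set 'I_n}) : anti (mins F).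
Proof.
apply/antiP => x y /minsP[xF _] /minsP[yF H] lxy; exact: H.
Qed.

Lemma exists_min n (F : {set 'I_n}) y : y \in F ->
  exists2 x, x \in mins F & xi_le x y.
Proof.
move=> yF.
have Py : (y \in F) && xi_le y y by rewrite yF le_refl.
case: (@arg_minnP _ y (fun x => (x \in F) && xi_le x y) (fun x : 'I_n => hn x.+1) Py) => x /andP[xF lxy] Hmin.
exists x => //; apply/minsP; split => // z zF lzx.
have := Hmin z; rewrite zF (le_trans lzx lxy) => /(_ isT) H.
by case: (le_ht lzx) => // ?; lia.
Qed.

Lemma up_mins n (F : {set 'I_n}) : is_filter F -> up (mins F) = F.
Proof.
move=> /filterP fF; apply/setP => y; apply/upP/idP.
  by case=> x /minsP[xF _] lxy; apply: fF lxy.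
by move/exists_min.
Qed.

Lemma mins_up n (A : {set 'I_n}) : anti A -> mins (up A) = A.
Proof.
move=> /antiP aA; apply/setP => x; apply/minsP/idP.
  case=> /upP[w wA lwx] H.
  have wu : w \in up A by apply/upP; exists w => //; apply: le_refl.
  by rewrite -(H w wu lwx).
move=> xA; split; first by apply/upP; exists x => //; apply: le_refl.
move=> z /upP[w wA lwz] lzx.
have ewx : w = x by apply: aA => //; apply: le_trans lzx.
by subst w; apply: le_anti.
Qed.

Lemma minD_filter n (F : {set 'I_n}) x :
  is_filter F -> x \in mins F -> is_filter (F :\ x).
Proof.
move=> /filterP fF /minsP[xF Hm]; apply/filterP => y z.
rewrite !inE => /andP[yx yF] lyz; rewrite (fF y z yF lyz) andbT.
apply/eqP => ezx; subst z.
by move: yx; rewrite (Hm y yF lyz) eqxx.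
Qed.

Lemma covers_set n (F : {set 'I_n}) : is_filter F ->
  [set G in filters n | omega_covers F G] = [set F :\ x | x in mins F].
Proof.
move=> fF; apply/setP => G; rewrite !inE; apply/andP/imsetP.
- case=> fG /andP[pGF /forall_inP Hno].
  move/properP: (pGF) => [sGF [y yF yG]].
  have Py : y \in F :\: G by rewrite inE yF yG.
  case: (@arg_minnP _ y (fun x => x \in F :\: G) (fun x : 'I_n => hn x.+1) Py) => x.
  rewrite inE => /andP[xG xF] Hmin.
  have xm : x \in mins F.
    apply/minsP; split => // z zF lzx.
    case zG : (z \in G).
      by move: xG; rewrite (filterP _ fG z x zG lzx).
    have := Hmin z; rewrite inE zG zF => /(_ isT) H.
    by case: (le_ht lzx) => // ?; lia.
  exists x => //.
  apply/eqP; apply: contraT => neq.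
  have pG : G \proper F :\ x.
    rewrite properEneq neq /=; apply/subsetP => z zG.
    rewrite !inE (subsetP sGF z zG) andbT; apply/eqP => ezx; subst z.
    by rewrite zG in xG.
  have := Hno (F :\ x); rewrite inE (minD_filter fF xm) pG properD1 //.
  by move=> /(_ isT).
- case=> x xm ->; split.
    by apply: minD_filter.
  move/minsP: (xm) => [xF _].
  rewrite /omega_covers properD1 //=; apply/forall_inP => H _; apply/negP => /andP[p1 p2].
  have c1 := proper_card p1; have c2 := proper_card p2.
  move: (cardsD1 x F); rewrite xF; lia.
Qed.

Lemma covers_card n (F : {set 'I_n}) : is_filter F ->
  #|[set G in filters n | omega_covers F G]| = #|mins F|.
Proof.
move=> fF; rewrite covers_set // card_in_imset //.
move=> x y /minsP[xF _] /minsP[yF _] exy.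
apply/eqP; apply: contraT => nxy.
have : x \in F :\ y by rewrite !inE nxy xF.
by rewrite -exy !inE eqxx.
Qed.

Lemma dminus_anti n k :
  dminus n k = #|[set A : {set 'I_n} | anti A && (#|A| == k)]|.
Proof.
rewrite /dminus.
have -> : [set F in filters n | #|[set G in filters n | omega_covers F G]| == k]
    = [set F in filters n | #|mins F| == k].
  apply/setP => F; rewrite !inE; case fF : (is_filter F) => //=.
  by rewrite covers_card.
have -> : [set A : {set 'I_n} | anti A && (#|A| == k)]
    = [set mins F | F in [set F in filters n | #|mins F| == k]].
  apply/setP => A; rewrite inE; apply/andP/imsetP.
    case=> aA cA; exists (up A); last by rewrite mins_up.
    by rewrite !inE up_filter mins_up.
  case=> F; rewrite !inE => /andP[fF cF] ->; split => //; exact: mins_anti.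
rewrite card_in_imset // => F G; rewrite !inE => /andP[fF _] /andP[fG _] e.
by rewrite -(up_mins fF) -(up_mins fG) e.
Qed.

Definition covn (n a b : nat) : bool :=
  [|| (a == 2) && (b == 1),
      (a == 3) && (b == 2),
      [&& 3 <= a, a <= n - 1, odd a & b == a.+1]
    | [&& 3 <= b, b <= n - 1, ~~ odd b & a == b.+1] ].

Lemma covE n (i j : 'I_n) : xi_cov i j = covn n i.+1 j.+1.
Proof. by []. Qed.

Lemma covnE n a b : covn n a b ->
  [\/ a = 2 /\ b = 1, a = 3 /\ b = 2,
      [/\ 3 <= a, a <= n - 1, a %% 2 = 1 & b = a.+1]
    | [/\ 3 <= b, b <= n - 1, b %% 2 = 0 & a = b.+1]].
Proof.
case/or4P.
- by case/andP=> /eqP-> /eqP->; constructor 1.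
- by case/andP=> /eqP-> /eqP->; constructor 2.
- case/and4P=> H1 H2 Ho /eqP->; constructor 3; split => //.
  by rewrite modn2 Ho.
- case/and4P=> H1 H2 Ho /eqP->; constructor 4; split => //.
  by rewrite modn2 (negbTE Ho).
Qed.

Lemma covn_chain n a b c : covn n a b -> covn n b c -> a = 3 /\ c = 1.
Proof. by move=> /covnE[[? ?]|[? ?]|[? ? ? ?]|[? ? ? ?]] /covnE[[? ?]|[? ?]|[? ? ? ?]|[? ? ? ?]]; lia. Qed.

Lemma covn_adj n a b : covn n a b -> a = b.+1 \/ b = a.+1.
Proof. by move=> /covnE[[? ?]|[? ?]|[? ? ? ?]|[? ? ? ?]]; lia. Qed.

Lemma covn_not3 n a : ~~ covn n a 3.
Proof. by apply/negP => /covnE[[? ?]|[? ?]|[? ? ? ?]|[? ? ? ?]]; lia. Qed.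

Lemma adj_covn n i : i.+2 <= n -> covn n i.+2 i.+1 || covn n i.+1 i.+2.
Proof.
move=> lt; case: i lt => [|[|i]] lt //.
case: (boolP (odd i)) => Ho.
- apply/orP; left; apply/or4P; constructor 4.
  apply/and4P; split; try lia; by rewrite /= ?negbK ?Ho.
- apply/orP; right; apply/or4P; constructor 3.
  apply/and4P; split; try lia; by rewrite /= ?negbK ?Ho.
Qed.

Lemma le_char n (x y : 'I_n) : xi_le x y ->
  [\/ x = y, xi_cov x y | (val x = 2 /\ val y = 0)].
Proof.
move/connectP=> [p]; elim: p x => [|z p IH] x /=; first by move=> _ ->; constructor 1.
case/andP=> cxz /IH H /H [<-|czy|[z2 y0]].
- by constructor 2.
- by move: cxz czy; rewrite !covE => /covn_chain H1 /H1 [? ?]; constructor 3; lia.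
- by move: cxz; rewrite covE z2 (negbTE (covn_not3 _ _)).
Qed.

Fixpoint nocons (s : seq bool) : bool :=
  if s is b :: s' then ~~ (b && head false s') && nocons s' else true.
Fixpoint special (s : seq bool) : bool :=
  match s with [:: x; _; z] => x && z | _ :: s' => special s' | [::] => false end.
Definition goodr s := nocons s && ~~ special s.

Lemma noconsP s :
  reflect (forall i, i.+1 < size s -> ~~ (nth false s i && nth false s i.+1)) (nocons s).
Proof.
elim: s => [|b s IH] /=; first by constructor.
apply: (iffP andP) => [[H1 /IH H2] [|i] Hi|H].
- by case: s H1 {IH H2} Hi.
- exact: H2.
split; last by apply/IH => i Hi; apply: (H i.+1).
by case: s H {IH} => [|c s] H; [rewrite andbF | apply: (H 0)].
Qed.

Lemma special_small s : size s < 3 -> special s = false.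
Proof. by case: s => [|a [|b [|c s]]]. Qed.

Lemma special_cons b s : 3 <= size s -> special (b :: s) = special s.
Proof. by case: s => [|a [|c [|d s]]]. Qed.

Lemma special_false s : special (false :: s) = special s.
Proof. by case: s => [|a [|c [|d s]]] //=; case: a. Qed.

Lemma special_nth s : 3 <= size s ->
  special s = nth false s (size s - 3) && nth false s (size s - 1).
Proof.
elim: s => [|b s IH] // Hs.
case: (ltnP 2 (size s)) => H3.
  rewrite special_cons // IH //=.
  have -> : (size s).+1 - 3 = (size s - 3).+1 by lia.
  by have -> : (size s).+1 - 1 = (size s - 1).+1 by lia.
by case: s Hs H3 {IH} => [|a [|c [|d s]]].
Qed.

Fixpoint allbits m : seq (seq bool) :=
  if m is m'.+1 then map (cons false) (allbits m') ++ map (cons true) (allbits m')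
  else [:: [::]].

Lemma cons_inj (b : bool) : injective (cons b).
Proof. by move=> ? ? []. Qed.

Lemma cons_notin b s (A : seq (seq bool)) : (b :: s \in map (cons (~~ b)) A) = false.
Proof. by apply/mapP => [[t _ E]]; case: b E => E; discriminate. Qed.

Lemma mem_allbits m s : (s \in allbits m) = (size s == m).
Proof.
elim: m s => [|m IH] [|b s] //=.
  by rewrite mem_cat; apply/orP => [[]] /mapP [t _].
rewrite mem_cat eqSS -IH; case: b.
  by rewrite (cons_notin true) mem_map //; apply: cons_inj.
by rewrite (cons_notin false) mem_map ?orbF //; apply: cons_inj.
Qed.

Lemma uniq_allbits m : uniq (allbits m).
Proof.
elim: m => //= m IH; rewrite cat_uniq !map_inj_uniq ?IH //=; try exact: cons_inj.
rewrite andbT; apply/hasPn => s /mapP [t _ ->]; by rewrite (cons_notin true).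
Qed.

Definition fA n (A : {set 'I_n}) (j : nat) : bool :=
  [exists x : 'I_n, (val x == j) && (x \in A)].
Definition bits n (A : {set 'I_n}) : seq bool := rev (mkseq (fA A) n).

Lemma fA_ord n (A : {set 'I_n}) (x : 'I_n) : fA A x = (x \in A).
Proof.
apply/existsP/idP => [[y /andP [/eqP /val_inj -> //]]|xA].
by exists x; rewrite eqxx.
Qed.

Lemma size_bits n (A : {set 'I_n}) : size (bits A) = n.
Proof. by rewrite size_rev size_mkseq. Qed.

Lemma nth_bits n (A : {set 'I_n}) i : i < n -> nth false (bits A) i = fA A (n - i.+1).
Proof.
move=> lt; rewrite nth_rev size_mkseq // nth_mkseq //; lia.
Qed.

Lemma card_count (T : finType) (p : pred T) : #|[set x | p x]| = count p (enum T).
Proof. rewrite enumT cardE /enum_mem size_filter; apply: eq_count => x; by rewrite /= inE. Qed.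

Lemma count_bits n (A : {set 'I_n}) : count id (bits A) = #|A|.
Proof.
rewrite count_rev /mkseq count_map -val_enum_ord count_map.
have -> : A = [set x | x \in A] by apply/setP => x; rewrite inE.
rewrite card_count; apply: eq_count => x /=; by rewrite fA_ord inE.
Qed.

Lemma bits_inj n : injective (@bits n).
Proof.
move=> A B e; apply/setP => x.
have lt : n - x.+1 < n by have := ltn_ord x; lia.
have := congr1 (nth false ^~ (n - x.+1)) e; rewrite /= !nth_bits //.
have -> : n - (n - x.+1).+1 = x by have := ltn_ord x; lia.
by rewrite !fA_ord.
Qed.

Lemma bits_onto n s : size s = n -> exists A : {set 'I_n}, bits A = s.
Proof.
move=> Hs; exists [set x : 'I_n | nth false s (n - x.+1)].
apply: (@eq_from_nth _ false); first by rewrite size_bits.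
move=> i; rewrite size_bits => lt; rewrite nth_bits //.
have lt2 : n - i.+1 < n by lia.
rewrite (fA_ord _ (Ordinal lt2)) inE /=.
by have -> : n - (n - i.+1).+1 = i by lia.
Qed.

Lemma card_bits n (P : pred (seq bool)) :
  #|[set A : {set 'I_n} | P (bits A)]| = count P (allbits n).
Proof.
rewrite card_count -(count_map (@bits n) P).
apply/permP; apply: uniq_perm.
- by rewrite map_inj_uniq ?enum_uniq //; apply: bits_inj.
- exact: uniq_allbits.
move=> s; rewrite mem_allbits; apply/mapP/eqP => [[A _ ->]|/bits_onto [A <-]].
  exact: size_bits.
by exists A; rewrite ?mem_enum.
Qed.

Lemma nocons_bits n (A : {set 'I_n}) :
  nocons (bits A) = [forall a : 'I_n, forall b : 'I_n,
                       (val a == (val b).+1) ==> ~~ ((a \in A) && (b \in A))].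
Proof.
apply/noconsP/forallP => [H a|H i].
  apply/forallP => b; apply/implyP => /eqP eab.
  change (nat_of_ord a = (nat_of_ord b).+1) in eab.
  have lt : (n - a.+1).+1 < size (bits A) by rewrite size_bits; have := ltn_ord a; lia.
  have := H _ lt; rewrite !nth_bits; try (rewrite size_bits in lt; lia).
  have -> : n - (n - a.+1).+1 = a by have := ltn_ord a; lia.
  have -> : n - (n - a.+1).+2 = b by have := ltn_ord a; lia.
  by rewrite !fA_ord.
rewrite size_bits => lt; rewrite !nth_bits; try lia.
have lta : n - i.+1 < n by lia.
have ltb : n - i.+2 < n by lia.
have := H (Ordinal lta) => /forallP /(_ (Ordinal ltb)) /implyP.
have -> : (val (Ordinal lta) == (val (Ordinal ltb)).+1) by apply/eqP => /=; lia.
by move=> /(_ isT); rewrite -!fA_ord.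
Qed.

Lemma special_bits n (A : {set 'I_n}) (o2 : 2 < n) (o0 : 0 < n) :
  special (bits A) = (Ordinal o2 \in A) && (Ordinal o0 \in A).
Proof.
rewrite special_nth size_bits // !nth_bits; try lia.
have -> : n - (n - 3).+1 = 2 by lia.
have -> : n - (n - 1).+1 = 0 by lia.
by rewrite -!fA_ord.
Qed.

Lemma anti_good n (A : {set 'I_n}) : anti A = goodr (bits A).
Proof.
apply/antiP/andP.
- move=> H; split.
    rewrite nocons_bits; apply/forallP => a; apply/forallP => b.
    apply/implyP => /eqP eab; apply/negP => /andP [aA bA].
    have lt : b.+2 <= n by rewrite -eab; exact: ltn_ord.
    change (nat_of_ord a = (nat_of_ord b).+1) in eab.
    have := adj_covn lt.
    case/orP => c.
      have c' : xi_cov a b by rewrite covE eab.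
      have := H a b aA bA (connect1 c') => /(congr1 val) /=; lia.
    have c' : xi_cov b a by rewrite covE eab.
    have := H b a bA aA (connect1 c') => /(congr1 val) /=; lia.
  apply/negP => sp; case: (ltnP 2 n) => n3; last first.
    by rewrite special_small ?size_bits in sp.
  have o0 : 0 < n by lia.
  have o1 : 1 < n by lia.
  move: sp; rewrite (special_bits _ n3 o0) => /andP [x2 x0].
  have c1 : xi_cov (Ordinal n3) (Ordinal o1) by [].
  have c2 : xi_cov (Ordinal o1) (Ordinal o0) by [].
  have := H _ _ x2 x0 (connect_trans (connect1 c1) (connect1 c2)).
  by move/(congr1 val).
- case=> nc nsp x y xA yA lxy.
  case: (le_char lxy) => [//|c|[x2 y0]].
    move: nc; rewrite nocons_bits => /forallP nc.
    move: c; rewrite covE => /covn_adj [e|e].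
      have := nc x => /forallP /(_ y) /implyP H'.
      have /H' : val x == (val y).+1 by apply/eqP; rewrite /=; lia.
      by rewrite xA yA.
    have := nc y => /forallP /(_ x) /implyP H'.
    have /H' : val y == (val x).+1 by apply/eqP; rewrite /=; lia.
    by rewrite xA yA.
  have n3 : 2 < n by have := ltn_ord x; move: x2 => /= x2; lia.
  have o0 : 0 < n by lia.
  move: nsp; rewrite (special_bits _ n3 o0).
  have -> : Ordinal n3 = x by apply: val_inj; rewrite /= x2.
  have -> : Ordinal o0 = y by apply: val_inj; rewrite /= y0.
  by rewrite xA yA.
Qed.

Definition acount n k := count (fun s => goodr s && (count id s == k)) (allbits n).

Lemma dminus_acount n k : dminus n k = acount n k.
Proof.
rewrite dminus_anti /acount -card_bits.
by apply: eq_card => A; rewrite !inE anti_good count_bits.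
Qed.

Lemma nocons_false s : nocons (false :: s) = nocons s. Proof. by []. Qed.
Lemma nocons_tt s : nocons (true :: true :: s) = false. Proof. by []. Qed.
Lemma nocons_tf s : nocons (true :: false :: s) = nocons s. Proof. by []. Qed.
Lemma countid_cons b s : count id (b :: s) = b + count id s. Proof. by []. Qed.

Lemma acount_rec m k : 2 <= m ->
  acount m.+2 k = acount m.+1 k + (if k is k'.+1 then acount m k' else 0).
Proof.
move=> m2; rewrite /acount [allbits m.+2]/= count_cat !count_map.
congr (_ + _).
  apply: eq_count => s /=; rewrite /goodr nocons_false special_false ?countid_cons.
  by rewrite add0n.
rewrite count_cat !count_map.
rewrite (@eq_count _ (preim (cons true) (preim (cons true) _)) pred0); last first.
  by [].  
rewrite count_pred0 addn0.
case: k => [|k].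
  rewrite (@eq_count _ _ pred0) ?count_pred0 //.
  by move=> s /=; rewrite ?countid_cons andbF.
apply: eq_in_count => s; rewrite mem_allbits => /eqP Hs /=.
rewrite /goodr nocons_tf special_cons; last by rewrite /= Hs.
by rewrite special_false ?countid_cons ?add0n ?add1n eqSS.
Qed.

Lemma Y_pascal m j : 1 <= m -> lucasY m.+1 j.+1 = lucasY m j.+1 + lucasY m j.
Proof.
case: m => // m _; rewrite /lucasY /=.
case: j => [|j]; rewrite !binS ?bin0 ?bin1 /=; lia.
Qed.

Lemma Y_zero m k : m < k -> 2 <= k -> lucasY m k = 0.
Proof.
case: k => [|[|k]] // H _; rewrite /lucasY !bin_small //; lia.
Qed.

Definition PP n := forall k, (k.*2 <= n.+1 -> acount n k = lucasY (n - k) k) /\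
                             (n.+1 < k.*2 -> acount n k = 0).

Lemma P2 : PP 2.
Proof.
move=> k; rewrite /acount /=.
case: k => [|[|[|k]]] //=.
Qed.

Lemma P3 : PP 3.
Proof.
move=> k; rewrite /acount /=.
case: k => [|[|[|[|k]]]] //=.
Qed.

Lemma PPS m : PP m.+2 -> PP m.+3 -> PP m.+4.
Proof.
move=> H2 H3 k; rewrite acount_rec //.
case: k => [|j].
  split => Hk; last by lia.
  rewrite addn0 (proj1 (H3 0)); last by lia.
  by rewrite /lucasY !subn0 /= !bin0.
have [A2 Z2] := H2 j; have [A3 Z3] := H3 j.+1.
split => Hk.
  case: (ltnP m.+4 (j.+1).*2) => Hk2.
    rewrite Z3 // A2; last by lia.
    rewrite !Y_zero //; lia.
  rewrite A3 // A2; last by lia.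
  have -> : m.+4 - j.+1 = (m.+2 - j).+1 by lia.
  have -> : m.+3 - j.+1 = m.+2 - j by lia.
  rewrite Y_pascal //; lia.
by rewrite Z3 ?Z2 //; lia.
Qed.

Lemma PP_all n : 2 <= n -> PP n.
Proof.
have H : forall m, PP m.+2 /\ PP m.+3.
  elim=> [|m [H2 H3]]; first by split; [exact: P2 | exact: P3].
  by split => //; apply: PPS.
case: n => [|[|n]] // _; exact: (H n).1.
Qed.

Theorem mainTheorem19 (n k : nat) :
  2 <= n -> k <= n./2 -> dminus n k = lucasY (n - k) k.
Proof.
move=> n2 kn; rewrite dminus_acount.
have [H _] := PP_all n2 k; apply: H; lia.
Qed.
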